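(* Let $H$ be a $3$-graph for which there is an enumeration $V(H)=\{v_1,\dots,v_n\}$ and a colouring $\phi$ of the pairs $\{v_a,v_b\}$ covered by edges of $H$ with colours red, blue, green such that every edge $\{v_i,v_j,v_k\}\in E(H)$ with $i<j<k$ satisfies $\phi(v_iv_j)=\text{red}$, $\phi(v_iv_k)=\text{blue}$, $\phi(v_jv_k)=\text{green}$. Then every subhypergraph $H'\subseteq H$ satisfies $\delta_{\mathrm{co}}(H')\le 1$.
   Context: A $3$-graph is a $3$-uniform hypergraph. For a $3$-graph $H$ and a $2$-subset $S\subseteq V(H)$, $d_H(S)$ is the number of edges containing $S$, and the minimum codegree $\delta_{\mathrm{co}}(H)$ is the minimum of $d_H(S)$ over all $2$-subsets $S$ of $V(H)$. *)

(* Defs.v *)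
From mathcomp Require Import all_boot.
Set Implicit Arguments. Unset Strict Implicit. Unset Printing Implicit Defensive.

Definition is_3graph (T : finType) (V : {set T}) (E : {set {set T}}) : Prop :=
  forall f, f \in E -> f \subset V /\ #|f| = 3.

Definition subhypergraph (T : finType) (V' : {set T}) (E' : {set {set T}})
    (V : {set T}) (E : {set {set T}}) : Prop :=
  [/\ V' \subset V, E' \subset E & forall f, f \in E' -> f \subset V'].

Definition codeg (T : finType) (E : {set {set T}}) (S : {set T}) : nat :=
  #|[set f in E | S \subset f]|.

(* delta_co(H) <= k, i.e. the minimum over 2-subsets S of V of d_H(S) is <= k,
   written out: some 2-subset S of V has d_H(S) <= k. *)
Definition mincodeg_le (T : finType) (V : {set T}) (E : {set {set T}}) (k : nat) : Prop :=
  exists S : {set T}, [/\ S \subset V, #|S| = 2 & codeg E S <= k].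

Inductive colour := red | blue | green.

(* Main.v *)
Require Import Defs.
From mathcomp Require Import all_boot.

Lemma min_exists (T : finType) (A : {set T}) (g : T -> nat) (x0 : T) :
  x0 \in A -> exists2 m, m \in A & forall x, x \in A -> g m <= g x.
Proof.
move=> Ax0; case: (arg_minnP g Ax0) => m Am Hm; exists m => //.
Qed.

Theorem mainTheorem2 (T : finType) (V : {set T}) (E : {set {set T}})
  (enum_ : T -> nat) (phi : {set T} -> colour) :
  is_3graph V E ->
  {in V &, injective enum_} ->
  (forall f, f \in E -> forall i j k, i \in f -> j \in f -> k \in f ->
     enum_ i < enum_ j -> enum_ j < enum_ k ->
     [/\ phi [set i; j] = red, phi [set i; k] = blue & phi [set j; k] = green]) ->
  forall (V' : {set T}) (E' : {set {set T}}),
    subhypergraph V' E' V E -> 2 <= #|V'| -> mincodeg_le V' E' 1.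
Proof.
move=> H3 Hinj Hcol V' E' [sVV sEE sfV] HV2.
have: 0 < #|V'| by apply: leq_trans HV2.
rewrite card_gt0 => /set0Pn [x0 Hx0].
have [v1 Hv1 Hmin1] := @min_exists _ _ enum_ _ Hx0.
have: 0 < #|V' :\ v1|.
  by move: HV2; rewrite (cardsD1 v1) Hv1.
rewrite card_gt0 => /set0Pn [x1 Hx1].
have [v2 Hv2 Hmin2] := @min_exists _ _ enum_ _ Hx1.
move: Hv2; rewrite in_setD1 => /andP [ne21 Hv2].
have inV : forall x, x \in V' -> x \in V by move=> x Hx; apply: (subsetP sVV).
have ltne : forall x y, x \in V' -> y \in V' -> x != y -> enum_ x <= enum_ y ->
    enum_ x < enum_ y.
  move=> x y Hx Hy nxy le; rewrite ltn_neqAle le andbT; apply/negP => /eqP e.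
  by move/eqP: nxy; apply; apply: Hinj => //; apply: inV.
have lt12 : enum_ v1 < enum_ v2 by apply: ltne => //; [rewrite eq_sym | apply: Hmin1].
have lt2 : forall z, z \in V' -> z != v1 -> z != v2 -> enum_ v2 < enum_ z.
  move=> z Hz n1 n2; apply: ltne => //; first by rewrite eq_sym.
  by apply: Hmin2; rewrite in_setD1 n1.
case: (leqP (codeg E' [set v1; v2]) 1) => Hc.
  exists [set v1; v2]; split => //.
    by apply/subsetP => x; rewrite !inE => /orP [] /eqP ->.
  by rewrite cards2 eq_sym ne21.
have : 0 < codeg E' [set v1; v2] by apply: leq_trans Hc.
rewrite /codeg card_gt0 => /set0Pn [f]; rewrite inE => /andP [fE sub12].
have fE0 : f \in E by apply: (subsetP sEE).
have [_ cf3] := H3 f fE0.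
have v1f : v1 \in f by apply: (subsetP sub12); rewrite !inE eqxx.
have v2f : v2 \in f by apply: (subsetP sub12); rewrite !inE eqxx orbT.
have : 0 < #|f :\: [set v1; v2]|.
  rewrite cardsD (setIidPr sub12) cards2 eq_sym ne21 cf3 //.
rewrite card_gt0 => /set0Pn [y]; rewrite !inE negb_or => /andP [/andP [ny1 ny2] yf].
have yV' : y \in V' by apply: (subsetP (sfV f fE)).
have lt2y : enum_ v2 < enum_ y by apply: lt2.
have [_ _ green_] := Hcol f fE0 v1 v2 y v1f v2f yf lt12 lt2y.
have fdef : f = [set v1; v2; y].
  apply/eqP; rewrite eq_sym eqEcard cf3.
  apply/andP; split.
    by apply/subsetP => x; rewrite !inE => /orP [/orP [] | ] /eqP ->.
  by rewrite setUC cardsU1 cards2 !inE negb_or ny1 ny2 (eq_sym v1) ne21.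
exists [set v2; y]; split.
- by apply/subsetP => x; rewrite !inE => /orP [] /eqP ->.
- by rewrite cards2 eq_sym ny2.
rewrite /codeg -(cards1 f); apply: subset_leq_card.
apply/subsetP => g; rewrite !inE => /andP [gE sg].
have gE0 : g \in E by apply: (subsetP sEE).
have [_ cg3] := H3 g gE0.
have v2g : v2 \in g by apply: (subsetP sg); rewrite !inE eqxx.
have yg : y \in g by apply: (subsetP sg); rewrite !inE eqxx orbT.
have sgf : g \subset f.
  apply/subsetP => z zg; rewrite fdef !inE.
  case: (eqVneq z v1) => //= n1; case: (eqVneq z v2) => //= n2.
  case: (eqVneq z y) => //= ny.
  have zV' : z \in V' by apply: (subsetP (sfV g gE)).
  have lt2z := lt2 z zV' n1 n2.
  have : enum_ z != enum_ y.
    apply/negP => /eqP e; move/eqP: ny; apply.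
    by apply: Hinj => //; apply: inV.
  rewrite neq_ltn => /orP [] lt.
  - by have [_ b _] := Hcol g gE0 v2 z y v2g zg yg lt2z lt; rewrite green_ in b.
  - by have [r _ _] := Hcol g gE0 v2 y z v2g yg zg lt2y lt; rewrite green_ in r.
by rewrite eqEcard sgf cf3 cg3.
Qed.
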